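(* In the setting described in the context, the length $N$ of any full route satisfies $N\le b^{\max}|E|/2$, where $b^{\max}=\max_{e\in E}b(e)$.
   Context: Let $G=(V,E)$ be a finite bipartite graph with color classes $W$ and $F$; the edge joining $w\in W$ and $f\in F$ is written $wf$. Let $b\in\mathbb Z_+^E$ be capacities. For $v\in V$, let $E_v$ be the set of edges incident to $v$, $\mathcal B_v=\{z\in\mathbb Z_+^{E_v}: z(e)\le b(e)\}$, $\mathbf 1^e$ the unit vector of $e$, $|z|=\sum_e|z(e)|$, $\wedge,\vee$ componentwise min and max. Each $v$ has a choice function $C_v:\mathcal B_v\to\mathcal B_v$ with $C_v(z)\le z$, satisfying for all $z,z'$: (A1) $z\ge z'\ge C_v(z)\Rightarrow C_v(z')=C_v(z)$; (A2) $z\ge z'\Rightarrow C_v(z)\wedge z'\le C_v(z')$; (A3) $z\ge z'\Rightarrow |C_v(z)|\ge|C_v(z')|$. Acceptable: $C_v(z)=z$; for distinct acceptable $z,z'$, $z'\prec_v z$ iff $C_v(z\vee z')=z$. $x_v$ is the restriction of $x$ to $E_v$; a g-matching is $x\in\mathbb Z_+^E$, $x\le b$, all $x_v$ acceptable; $x\prec_F y$ (distinct) iff $x_f\preceq_f y_f$ for all $f\in F$. Edge $e\in E_v$ is interesting for $v$ under acceptable $z$ if some $z'\in\mathcal B_v$ has $z'(e)>z(e)$, $z'(e')=z(e')$ for $e'\ne e$, $C_v(z')(e)>z(e)$; $e=wf$ blocks g-matching $x$ if it is interesting for $w$ under $x_w$ and for $f$ under $x_f$. $\mathcal S$ is the set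 of g-matchings with no blocking edge (stable); $(\mathcal S,\prec_F)$ is a nonempty finite distributive lattice with minimum $x^{\min}$ and maximum $x^{\max}$. Rotations: for $x\in\mathcal S$, $U_F^+(x)$ = edges $wf$ interesting for $f$ under $x_f$; $U_F^-(x)$ = edges $wf$ with $x(wf)>0$ not interesting for $f$. Legal $f$-pair: $(a,c)$, $a\in U_F^+(x)\cap E_f$, $c\in E_f\setminus\{a\}$, $C_f(x_f+\mathbf 1^a)=x_f+\mathbf 1^a-\mathbf 1^c$. Legal $w$-pair: $(c,a)$, $c\in U_F^-(x)\cap E_w$, $a\in U_F^+(x)\cap E_w$, $x_w+\mathbf 1^a-\mathbf 1^c$ acceptable for $w$; essential if no $d\in(U_F^+(x)\cap E_w)\setminus\{a\}$ is interesting for $w$ under $x_w+\mathbf 1^a-\mathbf 1^c$. Digraph with vertices $w^e,f^e$ for each $e=wf\in U_F^+(x)\cup U_F^-(x)$, arcs $(w^a,f^a)$ ($a\in U_F^+$), $(f^c,w^c)$ ($c\in U_F^-$), $(f^a,f^c)$ for legal $f$-pairs, $(w^c,w^a)$ for essential $w$-pairs; after repeatedly deleting vertices with no entering arc, the remaining directed cycles correspond to cyclic sequences $(a_1,c_1,\dots,a_k,c_k)$ of distinct edges of $G$, the rotations $R\in\mathcal R(x)$ applicable to $x$, with $\chi^R$ equal to $+1$ on the $a_i$, $-1$ on the $c_i$, $0$ elsewhere. $\tau_R(x)$ is the maximum $\lambda$ with $x+i\chi^R\in\mathcal S$ for $i=1,\dots,\lambda$. A full route is a sequence $x^{\min}=x_0,\dots,x_N=x^{\max}$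 with $x_i=x_{i-1}+\tau_{R_i}(x_{i-1})\chi^{R_i}$, $R_i\in\mathcal R(x_{i-1})$; $N$ is its length. *)

(* Defs.v *)
From mathcomp Require Import all_boot.
Set Implicit Arguments. Unset Strict Implicit. Unset Printing Implicit Defensive.

(* Bipartite graph: color classes W, F (finite types), edge set E (finite type),
   edge e joins ew e \in W and ef e \in F.
   A vector in Z_+^{E_v} is represented by a vector in Z_+^E vanishing outside E_v. *)

Section Model.
Variables (W F E : finType) (ew : E -> W) (ef : E -> F) (b : {ffun E -> nat}).
Variable C : (W + F)%type -> {ffun E -> nat} -> {ffun E -> nat}.

Definition vec := {ffun E -> nat}.

Definition inc (v : (W + F)%type) (e : E) : bool :=
  match v with inl w => ew e == w | inr f => ef e == f end.

Definition restr v (x : vec) : vec := [ffun e => if inc v e then x e else 0].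

Definition inB v (z : vec) : bool :=
  [forall e, (z e <= b e) && (~~ inc v e ==> (z e == 0))].

Definition vle (z z' : vec) : bool := [forall e, z e <= z' e].
Definition vmeet (z z' : vec) : vec := [ffun e => minn (z e) (z' e)].
Definition vjoin (z z' : vec) : vec := [ffun e => maxn (z e) (z' e)].
Definition vsize (z : vec) : nat := \sum_(e : E) z e.

Definition choice_axioms v : Prop :=
  (forall z, inB v z -> vle (C v z) z) /\
  (forall z z', inB v z -> inB v z' -> vle z' z -> vle (C v z) z' ->
     C v z' = C v z) /\
  (forall z z', inB v z -> inB v z' -> vle z' z ->
     vle (vmeet (C v z) z') (C v z')) /\
  (forall z z', inB v z -> inB v z' -> vle z' z ->
     vsize (C v z') <= vsize (C v z)).

Definition acceptable v (z : vec) : bool := inB v z && (C v z == z).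

Definition pref_le v (z' z : vec) : bool := (z' == z) || (C v (vjoin z z') == z).

Definition unitv (a : E) : vec := [ffun e => nat_of_bool (e == a)].

Definition interesting v (z : vec) (e : E) : Prop :=
  exists z' : vec, inB v z' /\ z e < z' e /\
    (forall e', e' != e -> z' e' = z e') /\ z e < C v z' e.

Definition g_matching (x : vec) : Prop :=
  vle x b /\ forall v, acceptable v (restr v x).

Definition blocking (x : vec) (e : E) : Prop :=
  interesting (inl (ew e)) (restr (inl (ew e)) x) e /\
  interesting (inr (ef e)) (restr (inr (ef e)) x) e.

Definition stable (x : vec) : Prop := g_matching x /\ forall e, ~ blocking x e.

Definition prefF (x y : vec) : Prop :=
  forall f : F, pref_le (inr f) (restr (inr f) x) (restr (inr f) y).

Definition Uplus (x : vec) (e : E) : Prop :=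
  interesting (inr (ef e)) (restr (inr (ef e)) x) e.
Definition Uminus (x : vec) (e : E) : Prop := 0 < x e /\ ~ Uplus x e.

(* legal f-pair (a,c): C_f(x_f + 1^a) = x_f + 1^a - 1^c (integer equation) *)
Definition legal_f (x : vec) (a c : E) : Prop :=
  Uplus x a /\ ef c = ef a /\ c <> a /\
  let z : vec := [ffun e => restr (inr (ef a)) x e + (e == a)] in
  forall e, C (inr (ef a)) z e + (e == c) = z e.

(* x_w + 1^a - 1^c  (subtraction exact when x c > 0 and c <> a) *)
Definition wmove (x : vec) (c a : E) : vec :=
  [ffun e => restr (inl (ew a)) x e + (e == a) - (e == c)].

Definition legal_w (x : vec) (c a : E) : Prop :=
  Uminus x c /\ Uplus x a /\ ew c = ew a /\
  acceptable (inl (ew a)) (wmove x c a).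

Definition essential (x : vec) (c a : E) : Prop :=
  legal_w x c a /\
  forall d, Uplus x d -> ew d = ew a -> d <> a ->
    ~ interesting (inl (ew a)) (wmove x c a) d.

(* digraph: vertex (e,false) = w^e, (e,true) = f^e *)
Definition dnode (x : vec) (u : E * bool) : Prop := Uplus x u.1 \/ Uminus x u.1.

Definition darc (x : vec) (u v : E * bool) : Prop :=
  dnode x u /\ dnode x v /\
  (((u.2 = false /\ v.2 = true /\ u.1 = v.1 /\ Uplus x u.1) \/
    (u.2 = true /\ v.2 = false /\ u.1 = v.1 /\ Uminus x u.1)) \/
   ((u.2 = true /\ v.2 = true /\ legal_f x u.1 v.1) \/
    (u.2 = false /\ v.2 = false /\ essential x u.1 v.1))).

Fixpoint alive (x : vec) (k : nat) (u : E * bool) : Prop :=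
  match k with
  | 0 => dnode x u
  | k'.+1 => alive x k' u /\ exists u', alive x k' u' /\ darc x u' u
  end.

Definition remaining (x : vec) (u : E * bool) : Prop := forall k, alive x k u.

(* R = (a_1,c_1,...,a_k,c_k) is a rotation applicable to x: a directed cycle
   w^{a_1} -> f^{a_1} -> f^{c_1} -> w^{c_1} -> w^{a_2} -> ... -> w^{a_1}
   of the remaining digraph, with distinct edges *)
Definition rotation (x : vec) (a c : seq E) : Prop :=
  match a with
  | [::] => False
  | a0 :: _ =>
    let k := size a in
    size c = k /\ uniq (a ++ c) /\
    forall i, i < k ->
      let ai := nth a0 a i in let ci := nth a0 c i in
      let an := nth a0 a ((i.+1) %% k) in
      [/\ remaining x (ai, false), remaining x (ai, true),
          remaining x (ci, true) & remaining x (ci, false)] /\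
      [/\ darc x (ai, false) (ai, true), darc x (ai, true) (ci, true),
          darc x (ci, true) (ci, false) & darc x (ci, false) (an, false)]
  end.

Definition shift (x : vec) (a c : seq E) (i : nat) : vec :=
  [ffun e => if e \in a then x e + i else if e \in c then x e - i else x e].

(* x + i chi^R is a nonnegative vector lying in S *)
Definition shift_ok (x : vec) (a c : seq E) (i : nat) : Prop :=
  (forall e, e \in c -> i <= x e) /\ stable (shift x a c i).

Definition is_tau (x : vec) (a c : seq E) (lam : nat) : Prop :=
  (forall i, 1 <= i <= lam -> shift_ok x a c i) /\
  (forall mu, (forall i, 1 <= i <= mu -> shift_ok x a c i) -> mu <= lam).

Definition route_step (x y : vec) : Prop :=
  exists a c lam, rotation x a c /\ is_tau x a c lam /\ y = shift x a c lam.

(* xs = [:: x_0; ...; x_N] is a full route; its length is N = (size xs).-1 *)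
Definition full_route (xmin xmax : vec) (xs : seq vec) : Prop :=
  match xs with
  | [::] => False
  | x0 :: _ =>
    x0 = xmin /\ last x0 xs = xmax /\
    forall i, i.+1 < size xs -> route_step (nth x0 xs i) (nth x0 xs i.+1)
  end.

End Model.

(* Main.v *)
Require Import Defs.
From mathcomp Require Import all_boot zify.
From Stdlib Require Import Classical ClassicalEpsilon.
Set Implicit Arguments. Unset Strict Implicit. Unset Printing Implicit Defensive.

Lemma sum_count (E : finType) (s : seq E) (p : pred E) : uniq s ->
  \sum_(e : E) ((e \in s) && p e) = count p s.
Proof.
move=> U; rewrite -sum1_count (big_mkcond (fun i => p i)) /= (@big_uniq _ _ _ _ s) //= [RHS]big_mkcond /=.
by apply: eq_bigr => e _; case: (e \in s); case: (p e).
Qed.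
Lemma count_nth_eq (T : Type) (p : pred T) x0 (s t : seq T) : size s = size t ->
  (forall i, i < size s -> p (nth x0 s i) = p (nth x0 t i)) -> count p s = count p t.
Proof.
elim: s t => [|y s IH] [|z t] //= [St] H.
by rewrite (H 0 erefl) (IH t St) // => i lt; apply: (H i.+1).
Qed.
Lemma nth_rot1 (T : Type) x0 (s : seq T) i : i < size s ->
  nth x0 (rot 1 s) i = nth x0 s (i.+1 %% size s).
Proof.
case: s => [|y s] //= lt; rewrite rot1_cons nth_rcons.
case: (ltnP i (size s)) => [lt2|ge].
  by rewrite modn_small.
have -> : i = size s by apply/eqP; rewrite eqn_leq ge -ltnS lt.
by rewrite eqxx modnn.
Qed.

Lemma sum_ind (E : finType) (d : E) : \sum_(e : E) (e == d) = 1.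
Proof. by rewrite (bigD1 d) //= eqxx big1 // => e /negbTE ->. Qed.

Section Basic.
Variables (W F E : finType) (ew : E -> W) (ef : E -> F) (b : {ffun E -> nat}).
Variable C : (W + F)%type -> {ffun E -> nat} -> {ffun E -> nat}.
Hypothesis HC : forall v, choice_axioms ew ef b C v.

Local Notation vec := (vec E).
Local Notation inB := (inB ew ef b).
Local Notation interesting := (interesting ew ef b C).
Local Notation acceptable := (acceptable ew ef b C).
Local Notation inc := (inc ew ef).

Definition setv (z : vec) d n : vec := [ffun e => if e == d then n else z e].

Lemma vleP (z z' : vec) : reflect (forall e, z e <= z' e) (vle z z').
Proof. exact: forallP. Qed.

Lemma inBP v (z : vec) : reflect (forall e, z e <= b e /\ (~~ inc v e -> z e = 0)) (inB v z).
Proof.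
apply: (iffP forallP) => H e.
  by case/andP: (H e) => H1 /implyP H2; split => // /H2 /eqP.
by case: (H e) => H1 H2; rewrite H1 /=; apply/implyP => /H2 ->.
Qed.

Lemma inB_le v (z z' : vec) : inB v z' -> vle z z' -> inB v z.
Proof.
move=> /inBP H /vleP L; apply/inBP => e; case: (H e) => H1 H2; split.
  exact: leq_trans (L e) H1.
by move=> /H2 E0; apply/eqP; rewrite -leqn0 -E0 L.
Qed.

Lemma inB_join v (z z' : vec) : inB v z -> inB v z' -> inB v (vjoin z z').
Proof.
move=> /inBP H /inBP H'; apply/inBP => e; rewrite ffunE.
case: (H e) (H' e) => H1 H2 [H1' H2']; split; first by rewrite geq_max H1.
by move=> N; rewrite H2 ?H2'.
Qed.

Lemma join_l (z z' : vec) : vle z (vjoin z z').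
Proof. by apply/vleP => d; rewrite ffunE leq_maxl. Qed.
Lemma join_r (z z' : vec) : vle z' (vjoin z z').
Proof. by apply/vleP => d; rewrite [vjoin _ _ _]ffunE leq_maxr. Qed.
Lemma vle_trans (x y z : vec) : vle x y -> vle y z -> vle x z.
Proof. by move=> /vleP H1 /vleP H2; apply/vleP => d; exact: leq_trans (H1 d) (H2 d). Qed.

Lemma vsize_le (u v : vec) : vle u v -> vsize u <= vsize v.
Proof. by move=> /vleP L; apply: leq_sum => e _. Qed.

Lemma eq_le_size (u v : vec) : vle u v -> vsize v <= vsize u -> u = v.
Proof.
move=> /vleP L S.
have E1 : vsize v = vsize u + \sum_e (v e - u e).
  by rewrite /vsize -big_split /=; apply: eq_bigr => e _; rewrite subnKC.
have : \sum_e (v e - u e) == 0.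
  by rewrite -(eqn_add2l (vsize u)) addn0 -E1 eqn_leq S vsize_le //; apply/vleP.
rewrite sum_nat_eq0 => /forallP H; apply/ffunP => e.
by apply/eqP; rewrite eqn_leq L /= -subn_eq0; apply: (implyP (H e)).
Qed.

Lemma A0 v (z : vec) : inB v z -> vle (C v z) z.
Proof. by case: (HC v) => H _; apply: H. Qed.

Lemma A1 v (z z' : vec) : inB v z -> vle z' z -> vle (C v z) z' -> C v z' = C v z.
Proof.
case: (HC v) => _ [H _] Bz L L'; apply: H => //; exact: inB_le Bz L.
Qed.

Lemma A2 v (z z' : vec) e : inB v z -> vle z' z -> minn (C v z e) (z' e) <= C v z' e.
Proof.
case: (HC v) => _ [_ [H _]] Bz L.
by move: (H z z' Bz (inB_le Bz L) L) => /vleP /(_ e); rewrite ffunE.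
Qed.

Lemma A3 v (z z' : vec) : inB v z -> vle z' z -> vsize (C v z') <= vsize (C v z).
Proof.
case: (HC v) => _ [_ [_ H]] Bz L; apply: H => //; exact: inB_le Bz L.
Qed.

Lemma inB_C v (z : vec) : inB v z -> inB v (C v z).
Proof. move=> Bz; exact: inB_le Bz (A0 Bz). Qed.

Lemma setvE (z : vec) d n e : setv z d n e = if e == d then n else z e.
Proof. by rewrite ffunE. Qed.

Lemma NI_set v (z : vec) d n : ~ interesting v z d -> inB v (setv z d n) -> z d < n ->
  C v (setv z d n) d <= z d.
Proof.
move=> Hni B lt; rewrite leqNgt; apply/negP => H; apply: Hni.
exists (setv z d n); split => //; split; first by rewrite setvE eqxx.
by split => // e' ne; rewrite setvE (negbTE ne).
Qed.

Lemma interesting_set v (z : vec) d n : inB v (setv z d n) -> z d < n ->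
  z d < C v (setv z d n) d -> interesting v z d.
Proof.
move=> B lt H; exists (setv z d n); split => //; split; first by rewrite setvE eqxx.
by split => // e' ne; rewrite setvE (negbTE ne).
Qed.

Lemma interesting_inv v (z : vec) d : interesting v z d ->
  exists n, [/\ inB v (setv z d n), z d < n & z d < C v (setv z d n) d].
Proof.
case=> z' [B [lt [oth H]]]; exists (z' d).
have -> : setv z d (z' d) = z'.
  by apply/ffunP => e; rewrite setvE; case: eqP => [->|/eqP ne] //; rewrite oth.
by [].
Qed.

Lemma acc_inB v (z : vec) : acceptable v z -> inB v z.
Proof. by case/andP. Qed.
Lemma acc_C v (z : vec) : acceptable v z -> C v z = z.
Proof. by case/andP => _ /eqP. Qed.

Lemma S1 v (u Z : vec) : acceptable v u -> inB v Z -> vle u Z ->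
  (forall d, u d < Z d -> ~ interesting v u d) -> C v Z = u.
Proof.
move=> Au BZ LuZ NI.
suff L : vle (C v Z) u by rewrite -(A1 BZ LuZ L) acc_C.
apply/vleP => d; have L0 := vleP _ _ (A0 BZ) d.
case: (ltnP (u d) (Z d)) => [lt|ge]; last exact: leq_trans L0 ge.
have LP : vle (setv u d (Z d)) Z.
  by apply/vleP => e; rewrite setvE; case: eqP => [->|_] //; apply/vleP.
have BP : inB v (setv u d (Z d)) by exact: inB_le BZ LP.
have H1 := A2 d BZ LP; rewrite setvE eqxx in H1.
have H2 := NI_set (NI d lt) BP lt.
by move: (leq_trans H1 H2); rewrite (minn_idPl L0).
Qed.

Lemma LM v (x y Y : vec) e : inB v x -> acceptable v y -> inB v Y -> vle x Y -> vle y Y ->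
  C v Y = y -> ~ interesting v x e -> ~ interesting v y e.
Proof.
move=> Bx Ay BY LxY LyY CY NIx /interesting_inv [n [Bz lt H]].
set z' := setv y e n in Bz H.
set Z := vjoin Y z'.
have BZ : inB v Z by exact: inB_join.
have LYZ : vle Y Z by exact: join_l.
have Lz'Z : vle z' Z by exact: join_r.
have L0 := vleP _ _ (A0 BZ).
have LCy : vle (C v Z) y.
  apply/vleP => d; have := A2 d BZ LYZ; rewrite CY.
  case: (eqVneq d e) => [->|ne].
    have : C v Z e <= x e.
      case: (ltnP (x e) (Z e)) => [lt'|ge]; last exact: leq_trans (L0 e) ge.
      have LP : vle (setv x e (Z e)) Z.
        apply/vleP => d0; rewrite setvE; case: eqP => [->|_] //.
        exact: leq_trans (vleP _ _ LxY d0) (vleP _ _ LYZ d0).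
      have BP : inB v (setv x e (Z e)) by exact: inB_le BZ LP.
      have H1 := A2 e BZ LP; rewrite setvE eqxx in H1.
      by move: (leq_trans H1 (NI_set NIx BP lt')); rewrite (minn_idPl (L0 e)).
    move=> Le; rewrite (minn_idPl (leq_trans Le (vleP _ _ LxY e))) //.
  have EZ : Z d = Y d by rewrite /Z /vjoin ffunE setvE (negbTE ne); apply/maxn_idPl; apply: (vleP _ _ LyY).
  by rewrite -EZ (minn_idPl (L0 d)).
have LyZ : vle y Z by apply/vleP => d; exact: leq_trans (vleP _ _ LyY d) (vleP _ _ LYZ d).
have CZ : C v Z = y by rewrite -(A1 BZ LyZ LCy) acc_C.
have Lyz' : vle (C v Z) z'.
  by rewrite CZ; apply/vleP => d; rewrite setvE; case: eqP => [->|_] //; exact: ltnW.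
have := A1 BZ Lz'Z Lyz'; rewrite CZ => E1.
by move: H; rewrite E1 ltnn.
Qed.


Lemma vsize_setv (z : vec) d n : vsize (setv z d n) + z d = vsize z + n.
Proof.
rewrite /vsize (bigD1 d) //= [in RHS](bigD1 d) //= setvE eqxx.
have -> : \sum_(i | i != d) setv z d n i = \sum_(i | i != d) z i.
  by apply: eq_bigr => e ne; rewrite setvE (negbTE ne).
lia.
Qed.

Lemma LA v (xv u : vec) a c : acceptable v xv -> acceptable v u -> a != c ->
  u a = (xv a).+1 -> (u c).+1 = xv c -> (forall e, e != a -> e != c -> u e = xv e) ->
  ~ interesting v xv a -> ~ interesting v u a.
Proof.
move=> Ax Au nac Ua Uc Uo NIx /interesting_inv [n [Bz lt H]].
set z' := setv u a n in Bz H.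
set Q := setv xv a n.
have LQ : vle Q (vjoin z' xv).
  apply/vleP => e; rewrite /Q setvE; case: eqP => [->|_].
    by rewrite /vjoin ffunE /z' setvE eqxx leq_maxl.
  by rewrite /vjoin ffunE leq_maxr.
have BQ : inB v Q by apply: inB_le LQ; apply: inB_join => //; exact: acc_inB.
have ltx : xv a < n by rewrite -ltnS -Ua ltnS ltnW.
have NQ := NI_set NIx BQ ltx.
have L1 : vle (C v Q) xv.
  apply/vleP => e; case: (eqVneq e a) => [->|ne] //.
  by have := vleP _ _ (A0 BQ) e; rewrite /Q setvE (negbTE ne).
have L2 : vle xv Q.
  by apply/vleP => e; rewrite /Q setvE; case: eqP => [->|_] //; exact: ltnW.
have CQ : C v Q = xv by rewrite -(A1 BQ L2 L1) acc_C.
have L3 : vle z' Q.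
  apply/vleP => e; rewrite /z' /Q !setvE; case: eqP => [_|/eqP ne] //.
  case: (eqVneq e c) => [->|nc]; first by rewrite -Uc.
  by rewrite Uo.
have S := A3 BQ L3; rewrite CQ in S.
set L := setv (setv xv c (u c)) a (u a).+1.
have LL : vle L (C v z').
  apply/vleP => e; have A := A2 e BQ L3; rewrite CQ in A; rewrite /L !setvE.
  case: (eqVneq e a) => [->|ne]; first exact: H.
  rewrite /z' setvE (negbTE ne) in A.
  case: (eqVneq e c) => [ec|nc].
    by subst e; rewrite (minn_idPr _) in A => //; rewrite -Uc leqnSn.
  by rewrite Uo // minnn in A.
have := vsize_le LL.
have E1 := vsize_setv (setv xv c (u c)) a (u a).+1.
have E2 := vsize_setv xv c (u c).
rewrite setvE (negbTE nac) in E1.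
have : vsize L = (vsize xv).+1.
  apply/eqP; rewrite -(eqn_add2r (xv a + xv c)) addnA E1 addnAC.
  rewrite -addnA (addnC (xv a)) addnA E2 Ua -Uc; apply/eqP; lia.
move=> ->; move=> S'; move: (leq_trans S' S); by rewrite ltnn.
Qed.

Lemma LW v (P : pred nat) (f : nat -> vec) (yv z' : vec) i0 : P i0 ->
  (forall i, P i -> acceptable v (f i)) -> (forall i, P i -> vsize (f i) = vsize yv) ->
  inB v z' -> vle yv z' ->
  (forall i d, P i -> f i d < z' d -> ~ interesting v (f i) d) ->
  (forall d, exists2 i, P i & yv d <= f i d) -> C v z' = yv.
Proof.
move=> P0 Af Sf Bz Lyz NI Cov.
have CZ i : P i -> C v (vjoin z' (f i)) = f i.
  move=> Pi; apply: S1; [exact: Af|apply: inB_join => //; exact/acc_inB/Af|exact: join_r|].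
  move=> d; rewrite /vjoin ffunE => lt; apply: NI => //; move: lt.
  by case: (leqP (z' d) (f i d)) => [h|h _ //]; rewrite ltnn.
have BZ i : P i -> inB v (vjoin z' (f i)) by move=> Pi; apply: inB_join => //; exact/acc_inB/Af.
have Ly : vle yv (C v z').
  apply/vleP => d; case: (Cov d) => i Pi Li.
  have := A2 d (BZ i Pi) (join_l z' (f i)); rewrite CZ //.
  apply: leq_trans; rewrite leq_min Li; exact: (vleP _ _ Lyz).
apply/esym/eq_le_size => //.
have := A3 (BZ i0 P0) (join_l z' (f i0)); rewrite CZ // Sf //.
Qed.

End Basic.


Definition pb (P : Prop) : bool := if excluded_middle_informative P then true else false.
Lemma pbP (P : Prop) : reflect P (pb P).
Proof. by rewrite /pb; case: excluded_middle_informative => h; constructor. Qed.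

Section Rot.
Variables (W F E : finType) (ew : E -> W) (ef : E -> F) (b : {ffun E -> nat}).
Variable C : (W + F)%type -> {ffun E -> nat} -> {ffun E -> nat}.
Hypothesis HC : forall v, choice_axioms ew ef b C v.

Local Notation vec := (vec E).
Local Notation inB := (inB ew ef b).
Local Notation interesting := (interesting ew ef b C).
Local Notation acceptable := (acceptable ew ef b C).
Local Notation inc := (inc ew ef).
Local Notation Uplus := (Uplus ew ef b C).
Local Notation Uminus := (Uminus ew ef b C).
Local Notation legal_f := (legal_f ew ef b C).
Local Notation legal_w := (legal_w ew ef b C).
Local Notation essential := (essential ew ef b C).
Local Notation stable := (stable ew ef b C).
Local Notation restr := (restr ew ef).
Local Notation wmove := (wmove ew ef).

Variables (x : vec) (a c : seq E) (a0 : E).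
Hypothesis Hx : stable x.
Hypothesis Hsz : size c = size a.
Hypothesis Hu : uniq (a ++ c).
Hypothesis HUp : forall i, i < size a -> Uplus x (nth a0 a i).
Hypothesis Hlf : forall i, i < size a -> legal_f x (nth a0 a i) (nth a0 c i).
Hypothesis HUm : forall i, i < size a -> Uminus x (nth a0 c i).
Hypothesis Hes : forall i, i < size a -> essential x (nth a0 c i) (nth a0 (rot 1 a) i).

Local Notation k := (size a).
Local Notation ar := (rot 1 a).

Lemma Hxb : vle x b. Proof. by case: Hx => [[]]. Qed.
Lemma Hxacc v : acceptable v (restr v x). Proof. by case: Hx => [[_ H] _]. Qed.
Lemma Hxnb e : interesting (inr (ef e)) (restr (inr (ef e)) x) e ->
  ~ interesting (inl (ew e)) (restr (inl (ew e)) x) e.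
Proof. by case: Hx => _ H Hf Hw; apply: (H e). Qed.

Lemma restrE v (z : vec) e : restr v z e = if inc v e then z e else 0.
Proof. by rewrite ffunE. Qed.

Lemma shiftE (z : vec) i e : shift z a c i e =
  if e \in a then z e + i else if e \in c then z e - i else z e.
Proof. by rewrite ffunE. Qed.

Lemma disj e : e \in a -> e \in c -> False.
Proof.
move: Hu; rewrite cat_uniq => /and3P [_ /hasPn H _] ea ec.
by move: (H e ec); rewrite /= ea.
Qed.
Lemma memA e : e \in a -> exists2 i, i < k & e = nth a0 a i.
Proof. by move=> ea; exists (index e a); [rewrite index_mem | rewrite nth_index]. Qed.
Lemma memC e : e \in c -> exists2 i, i < k & e = nth a0 c i.
Proof. by move=> ec; exists (index e c); [rewrite -Hsz index_mem | rewrite nth_index]. Qed.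
Lemma memN e : e \in a -> exists2 i, i < k & e = nth a0 ar i.
Proof.
rewrite -(mem_rot 1) => ea; exists (index e ar); last by rewrite nth_index.
by rewrite -(size_rot 1) index_mem.
Qed.
Lemma inA i : i < k -> nth a0 a i \in a. Proof. exact: mem_nth. Qed.
Lemma inC i : i < k -> nth a0 c i \in c. Proof. by move=> H; rewrite mem_nth // Hsz. Qed.
Lemma inN i : i < k -> nth a0 ar i \in a.
Proof. by move=> H; rewrite -(mem_rot 1) mem_nth // size_rot. Qed.

Lemma UpA e : e \in a -> Uplus x e.
Proof. by case/memA => i H ->; apply: HUp. Qed.
Lemma UmC e : e \in c -> Uminus x e.
Proof. by case/memC => i H ->; apply: HUm. Qed.
Lemma xpos e : e \in c -> 0 < x e.
Proof. by case/UmC. Qed.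
Lemma notUp e : e \in c -> ~ Uplus x e.
Proof. by case/UmC. Qed.
Lemma efAC i : i < k -> ef (nth a0 c i) = ef (nth a0 a i).
Proof. by move=> H; case: (Hlf H) => _ []. Qed.
Lemma ewCN i : i < k -> ew (nth a0 c i) = ew (nth a0 ar i).
Proof. by move=> H; case: (Hes H) => [[_ [_ [? _]]] _]. Qed.

Lemma Up_lt e : Uplus x e -> x e < b e.
Proof.
move=> [z' [Bz [lt _]]]; move/inBP: Bz => Bz; move: lt; rewrite restrE /= eqxx => lt.
by apply: leq_trans lt _; case: (Bz e).
Qed.

Lemma inB_restr v (z : vec) : vle z b -> inB v (restr v z).
Proof.
move=> /vleP L; apply/inBP => e; rewrite restrE.
by case: (inc v e) => //; split => //; apply: L.
Qed.

Local Notation y1 := (shift x a c 1).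

Lemma y1_le_b : vle y1 b.
Proof.
apply/vleP => e; rewrite shiftE; case: ifP => [ea|_].
  by rewrite addn1; apply: Up_lt; apply: UpA.
have := vleP _ _ Hxb e; case: ifP => // _ H; exact: leq_trans (leq_subr _ _) H.
Qed.

Definition Yf f : vec := [ffun e => restr (inr f) x e + ((e \in a) && (ef e == f))].

Lemma YfE f e : Yf f e = restr (inr f) x e + ((e \in a) && (ef e == f)).
Proof. by rewrite ffunE. Qed.

Lemma legal_eq j : j < k ->
  forall e, C (inr (ef (nth a0 a j))) [ffun e => restr (inr (ef (nth a0 a j))) x e + (e == nth a0 a j)] e
     + (e == nth a0 c j) = [ffun e => restr (inr (ef (nth a0 a j))) x e + (e == nth a0 a j)] e.
Proof. by move=> H; case: (Hlf H) => _ [_ [_ L]]; exact: L. Qed.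

Lemma Cf f : C (inr f) (Yf f) = restr (inr f) y1 /\ acceptable (inr f) (restr (inr f) y1).
Proof.
have Bxf := acc_inB (Hxacc (inr f)).
have BY : inB (inr f) (Yf f).
  apply/inBP => e; rewrite ffunE restrE /=; case: eqP => _ /=; last by rewrite andbF.
  rewrite andbT; case ea: (e \in a); last by rewrite addn0; split => //; exact: (vleP _ _ Hxb).
  by rewrite addn1; split => //; apply: Up_lt; apply: UpA.
have LyY : vle (restr (inr f) y1) (Yf f).
  apply/vleP => e; rewrite /Yf !ffunE /=; case: eqP => _ //=.
  rewrite andbT; case ea: (e \in a) => //=; rewrite addn0; case: ifP => // _; exact: leq_subr.
case: (boolP (has (fun e => ef e == f) a)) => [/hasP [e ea /eqP efe] | /hasPn Hn].
  case/memA: ea => i ik ei; subst e.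
  set zz := fun j => [ffun e => restr (inr f) x e + (e == nth a0 a j)].
  have Hz j : j < k -> ef (nth a0 a j) = f ->
      forall e, C (inr f) (zz j) e + (e == nth a0 c j) = zz j e.
    by move=> jk efj; have := legal_eq jk; rewrite efj.
  have Lz j : j < k -> ef (nth a0 a j) = f -> vle (zz j) (Yf f).
    move=> jk efj; apply/vleP => e; rewrite !ffunE; case: eqP => [->|_].
      by rewrite inA // efj eqxx.
    by rewrite addn0 leq_addr.
  have LC : vle (C (inr f) (Yf f)) (restr (inr f) y1).
    apply/vleP => d; have Ld := vleP _ _ (A0 HC BY) d.
    move: Ld; rewrite YfE !restrE shiftE /=; case: eqP => [efd|_] /=; last by rewrite andbF addn0.
    rewrite andbT; case da: (d \in a) => /=; first by rewrite addn1.
    rewrite addn0; case dc: (d \in c) => Ld //.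
    case/memC: dc => j jk dj; subst d.
    have efj : ef (nth a0 a j) = f by rewrite -efAC.
    have H1 := A2 HC (nth a0 c j) BY (Lz j jk efj).
    have H2 := Hz j jk efj (nth a0 c j).
    rewrite eqxx addn1 in H2.
    have E1 : zz j (nth a0 c j) = x (nth a0 c j).
      rewrite ffunE restrE /= efAC // efj eqxx.
      case: eqP => [E0|_]; last by rewrite addn0.
      by exfalso; apply: (@disj (nth a0 c j)); [rewrite E0 inA | rewrite inC].
    rewrite E1 in H2; rewrite E1 in H1.
    have xp := xpos (inC jk).
    rewrite leqNgt; apply/negP => lt.
    have : minn (C (inr f) (Yf f) (nth a0 c j)) (x (nth a0 c j)) = x (nth a0 c j).
      by apply/minn_idPr; rewrite -ltnS -(ltn_predK xp) -subn1 ltnS.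
    by move=> Em; rewrite Em in H1; move: (leq_trans H1 (leqnn _)); rewrite -H2 ltnn.
  have SZ : vsize (restr (inr f) y1) <= vsize (C (inr f) (Yf f)).
    have S1' := A3 HC BY (Lz i ik efe).
    have S2 : vsize (C (inr f) (zz i)) + 1 = vsize (zz i).
      by rewrite -(sum_ind (nth a0 c i)) /vsize -big_split /=; apply: eq_bigr => e _; rewrite Hz.
    have S3 : vsize (zz i) = vsize (restr (inr f) x) + 1.
      by rewrite -(sum_ind (nth a0 a i)) /vsize -big_split /=; apply: eq_bigr => e _; rewrite ffunE.
    have S4 : vsize (restr (inr f) y1) + count (fun e => ef e == f) c =
              vsize (restr (inr f) x) + count (fun e => ef e == f) a.
      move: Hu; rewrite cat_uniq => /and3P [ua _ uc].
      rewrite -(sum_count _ ua) -(sum_count _ uc) /vsize -!big_split /=.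
      apply: eq_bigr => e _; rewrite !restrE shiftE /=; case: eqP => _ /=; last by rewrite !andbF.
      rewrite !andbT; case: ifP => ea.
        case ec: (e \in c); [by exfalso; exact: (disj ea ec) | by rewrite addn0].
      case: ifP => ec //=; rewrite addn0 addn1 subn1 prednK //; exact: xpos.
    have S5 : count (fun e => ef e == f) c = count (fun e => ef e == f) a.
      by apply: (@count_nth_eq _ _ a0); rewrite Hsz // => j jk; rewrite /= efAC // -Hsz.
    rewrite S5 in S4; lia.
  have CY : C (inr f) (Yf f) = restr (inr f) y1 by exact: (eq_le_size LC SZ).
  split => //; apply/andP; split; first exact: inB_le BY LyY.
  have Lr : vle (C (inr f) (Yf f)) (restr (inr f) y1) by rewrite CY; apply/vleP.
  by apply/eqP; rewrite (A1 HC BY LyY Lr) CY.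
have E1 : Yf f = restr (inr f) x.
  apply/ffunP => e; rewrite YfE restrE /=; case: eqP => [efe|_]; last by rewrite andbF.
  case ea: (e \in a) => /=; last by rewrite addn0.
  by move: (Hn e ea); rewrite efe eqxx.
have E2 : restr (inr f) y1 = restr (inr f) x.
  apply/ffunP => e; rewrite !restrE shiftE /=; case: eqP => [efe|_] //.
  case: ifP => ea; first by move: (Hn e ea); rewrite efe eqxx.
  case: ifP => ec //; case/memC: ec => j jk ej.
  by move: (Hn _ (inA jk)); rewrite -efAC // -ej efe eqxx.
by rewrite E1 E2 (acc_C (Hxacc _)); split => //; exact: Hxacc.
Qed.


Definition Pw w j := (j < k) && (ew (nth a0 c j) == w).
Definition uw j : vec := wmove x (nth a0 c j) (nth a0 ar j).

Lemma uwE j e : j < k -> uw j e =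
  restr (inl (ew (nth a0 c j))) x e + (e == nth a0 ar j) - (e == nth a0 c j).
Proof. by move=> jk; rewrite /uw ffunE ewCN. Qed.

Lemma NdC j : j < k -> nth a0 ar j != nth a0 c j.
Proof.
move=> jk; apply/eqP => E0; apply: (@disj (nth a0 c j)); last exact: inC.
by rewrite -E0; apply: inN.
Qed.

Lemma uw_acc w j : Pw w j -> acceptable (inl w) (uw j).
Proof.
case/andP => jk /eqP ewj; case: (Hes jk) => [[_ [_ [_ Hacc]]] _].
by rewrite -ewCN // ewj in Hacc.
Qed.

Lemma uw_size w j : Pw w j -> vsize (uw j) = vsize (restr (inl w) x).
Proof.
case/andP => jk /eqP ewj; apply/eqP; rewrite -(eqn_add2r 1).
rewrite -{1}(sum_ind (nth a0 c j)) -(sum_ind (nth a0 ar j)) /vsize -!big_split /=.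
apply/eqP/eq_bigr => e _; rewrite uwE // ewj restrE /=.
case: (eqVneq e (nth a0 c j)) => [->|ne].
  have h : (nth a0 c j == nth a0 ar j) = false by rewrite eq_sym (negbTE (NdC jk)).
  rewrite h ewj eqxx /= addn0 subn1 addn1 prednK //.
  exact: xpos (inC jk).
by rewrite subn0 addn0.
Qed.

Lemma yw_size w : vsize (restr (inl w) y1) = vsize (restr (inl w) x).
Proof.
have S4 : vsize (restr (inl w) y1) + count (fun e => ew e == w) c =
          vsize (restr (inl w) x) + count (fun e => ew e == w) a.
  move: Hu; rewrite cat_uniq => /and3P [ua _ uc].
  rewrite -(sum_count _ ua) -(sum_count _ uc) /vsize -!big_split /=.
  apply: eq_bigr => e _; rewrite !restrE shiftE /=; case: eqP => _ /=; last by rewrite !andbF.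
  rewrite !andbT; case: ifP => ea.
    case ec: (e \in c); [by exfalso; exact: (disj ea ec) | by rewrite addn0].
  case: ifP => ec //=; rewrite addn0 addn1 subn1 prednK //; exact: xpos.
have S5 : count (fun e => ew e == w) c = count (fun e => ew e == w) a.
  have -> : count (fun e => ew e == w) a = count (fun e => ew e == w) ar.
    by apply/esym/permP; rewrite perm_rot.
  by apply: (@count_nth_eq _ _ a0); rewrite ?size_rot // Hsz // => j jk; rewrite /= ewCN // -Hsz.
rewrite S5 in S4; lia.
Qed.

Lemma yw_le_uw w j d : Pw w j -> ~~ ((d \in a) && (ew d == w)) ->
  restr (inl w) y1 d <= uw j d.
Proof.
case/andP => jk /eqP ewj nd; rewrite uwE // ewj !restrE shiftE /=.
case: eqP => [ewd|_] //; move: nd; rewrite ewd eqxx andbT => /negbTE da.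
rewrite da.
have -> : (d == nth a0 ar j) = false.
  by apply/negbTE; apply/eqP => E0; move: da; rewrite E0 inN.
rewrite addn0; case: (eqVneq d (nth a0 c j)) => [->|ne].
  by rewrite inC.
by case: ifP => _; rewrite subn0 ?leq_subr.
Qed.

Lemma Cw w (z' : vec) : (exists j, Pw w j) -> inB (inl w) z' ->
  vle (restr (inl w) y1) z' -> (forall d, restr (inl w) y1 d < z' d -> Uplus x d) ->
  C (inl w) z' = restr (inl w) y1.
Proof.
move=> [j0 P0] Bz Lyz Hyp.
apply: (LW HC (P := Pw w) (f := uw) (i0 := j0)) => //.
- exact: uw_acc.
- by move=> j Pj; rewrite (uw_size Pj) yw_size.
- move=> j d Pj lt.
  have ewd : ew d = w.
    move/inBP: Bz => /(_ d) [_ H0]; apply/eqP; apply: contraTT lt => /H0 ->.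
    by rewrite ltn0.
  have Upd : Uplus x d.
    case: (ltnP (restr (inl w) y1 d) (z' d)) => [h|h]; first exact: Hyp.
    case: (boolP (d \in a)) => [da|nda]; first exact: UpA.
    have h2 : restr (inl w) y1 d <= uw j d by apply: yw_le_uw Pj _; rewrite (negbTE nda).
    by move: (leq_trans lt (leq_trans h h2)); rewrite ltnn.
  case/andP: (Pj) => jk /eqP ewj.
  case: (eqVneq d (nth a0 ar j)) => [dN|ne].
    rewrite dN; rewrite dN in Upd ewd.
    apply: (LA HC (xv := restr (inl w) x) (c := nth a0 c j)).
    + exact: Hxacc.
    + exact: uw_acc.
    + exact: NdC.
    + by rewrite uwE // eqxx (negbTE (NdC jk)) subn0 addn1 ewj.
    + have h : (nth a0 c j == nth a0 ar j) = false by rewrite eq_sym (negbTE (NdC jk)).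
      rewrite uwE // eqxx h addn0 subn1 prednK // ewj.
        by rewrite restrE /= ewj eqxx.
      by rewrite restrE /= ewj eqxx; exact: xpos (inC jk).
    + by move=> e n1 n2; rewrite uwE // (negbTE n1) (negbTE n2) addn0 subn0 ewj.
    + by have := Hxnb Upd; rewrite ewd.
  case: (Hes jk) => _ Hn.
  have := Hn d Upd; rewrite -ewCN // ewj => /(_ ewd) H; apply: H.
  by apply/eqP.
- move=> d; case: (boolP ((d \in a) && (ew d == w))) => [/andP [da /eqP ewd] | nd].
    case/memN: (da) => j jk dj.
    have Pj : Pw w j by rewrite /Pw jk /= ewCN // -dj ewd.
    exists j => //; rewrite uwE // -dj eqxx.
    have -> : (d == nth a0 c j) = false.
      by apply/negbTE/eqP => E0; apply: (@disj d) => //; rewrite E0 inC.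
    by rewrite subn0 !restrE shiftE /= ewCN // -dj ewd eqxx da.
  by exists j0 => //; apply: yw_le_uw.
Qed.


Lemma w_noedge w : ~ (exists j, Pw w j) -> restr (inl w) y1 = restr (inl w) x.
Proof.
move=> Hn; apply/ffunP => e; rewrite !restrE shiftE /=; case: eqP => [ewe|_] //.
case: ifP => ea.
  case/memN: ea => j jk ej; exfalso; apply: Hn; exists j.
  by rewrite /Pw jk ewCN // -ej ewe /=.
case: ifP => ec //; case/memC: ec => j jk ej; exfalso; apply: Hn; exists j.
by rewrite /Pw jk -ej ewe /=.
Qed.

Lemma y1_stable : stable y1.
Proof.
split; first split; first exact: y1_le_b.
  case=> [w|f]; last by case: (Cf f).
  case: (classic (exists j, Pw w j)) => [Hj|Hn]; last by rewrite w_noedge //; exact: Hxacc.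
  apply/andP; split; first by apply: inB_restr; exact: y1_le_b.
  apply/eqP; apply: Cw => //; first by apply: inB_restr; exact: y1_le_b.
    by apply/vleP.
  by move=> d; rewrite ltnn.
move=> e [Hw Hf].
have Upe : Uplus x e.
  apply: NNPP => NU; move: Hf; apply: (LM HC (x := restr (inr (ef e)) x) (Y := Yf (ef e))).
  - exact: acc_inB (Hxacc _).
  - by case: (Cf (ef e)).
  - apply/inBP => d; rewrite YfE restrE /=; case: eqP => _ /=; last by rewrite andbF.
    rewrite andbT; case da: (d \in a); last by rewrite addn0; split => //; exact: (vleP _ _ Hxb).
    by rewrite addn1; split => //; apply: Up_lt; apply: UpA.
  - by apply/vleP => d; rewrite YfE leq_addr.
  - apply/vleP => d; rewrite YfE !restrE shiftE /=; case: eqP => _ //=.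
    rewrite andbT; case da: (d \in a) => //=; rewrite addn0; case: ifP => // _; exact: leq_subr.
  - by case: (Cf (ef e)).
  - exact: NU.
case: (classic (exists j, Pw (ew e) j)) => [Hj|Hn]; last first.
  by rewrite w_noedge // in Hw; exact: (Hxnb Upe Hw).
case/interesting_inv: Hw => n [Bz lt H].
have Bz' := Bz.
have := @Cw (ew e) (setv (restr (inl (ew e)) y1) e n) Hj Bz.
have L : vle (restr (inl (ew e)) y1) (setv (restr (inl (ew e)) y1) e n).
  by apply/vleP => d; rewrite setvE; case: eqP => [->|_] //; exact: ltnW.
move=> /(_ L) /(_ _) CE.
have : C (inl (ew e)) (setv (restr (inl (ew e)) y1) e n) = restr (inl (ew e)) y1.
  apply: CE => d; rewrite setvE; case: eqP => [->|_] //; by rewrite ltnn.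
by move=> E0; move: H; rewrite E0 ltnn.
Qed.


Variable lam : nat.
Hypothesis Hl1 : 0 < lam.
Hypothesis Hxl : stable (shift x a c lam).
Local Notation xl := (shift x a c lam).

Lemma Hxlb : vle xl b. Proof. by case: Hxl => [[]]. Qed.
Lemma Hxlacc v : acceptable v (restr v xl). Proof. by case: Hxl => [[_ H] _]. Qed.

Lemma Gf f : C (inr f) (vjoin (restr (inr f) x) (restr (inr f) xl)) = restr (inr f) xl.
Proof.
set Z := vjoin _ _.
have Bxf := acc_inB (Hxacc (inr f)).
have Bxl := acc_inB (Hxlacc (inr f)).
have BZ : inB (inr f) Z by exact: inB_join.
have LC : vle (C (inr f) Z) (restr (inr f) xl).
  apply/vleP => d; have L0 := vleP _ _ (A0 HC BZ) d.
  case: (boolP ((d \in c) && (ef d == f))) => [/andP [dc /eqP efd] | nd].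
    rewrite leqNgt; apply/negP => lt.
    set v := C (inr f) Z d in L0 lt.
    have LW : vle (setv (restr (inr f) xl) d v) Z.
      apply/vleP => e; rewrite setvE; case: eqP => [->|_] //; exact: (vleP _ _ (join_r _ _) e).
    have BW := inB_le BZ LW.
    have H1 := A2 HC d BZ LW; rewrite setvE eqxx minnn in H1.
    have If := interesting_set BW lt (leq_trans lt H1).
    set w := ew d.
    set Zw := vjoin (restr (inl w) x) (restr (inl w) xl).
    have BZw : inB (inl w) Zw by apply: inB_join; [exact: acc_inB (Hxacc _)|exact: acc_inB (Hxlacc _)].
    have CZw : C (inl w) Zw = restr (inl w) x.
      apply: (S1 HC); [exact: Hxacc | exact: BZw | exact: join_l | move=> e' lt'].
      have lt2 : restr (inl w) x e' < restr (inl w) xl e'.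
        move: lt'; rewrite /Zw [vjoin _ _ _]ffunE.
        by case: (leqP (restr (inl w) xl e') (restr (inl w) x e')) => h; rewrite ?ltnn.
      move: lt2; rewrite !restrE shiftE /=; case: eqP => [ewe|_]; last by rewrite ltnn.
      case: ifP => ea; last by case: ifP => _; rewrite ?ltnn // ltnNge leq_subr.
      by move=> _; rewrite -ewe; apply: Hxnb; apply: UpA.
    have LK : vle (setv (restr (inl w) xl) d (x d)) Zw.
      apply/vleP => e; rewrite setvE; case: eqP => [->|_]; last exact: (vleP _ _ (join_r _ _) e).
      have := vleP _ _ (join_l (restr (inl w) x) (restr (inl w) xl)) d.
      by rewrite restrE /= eqxx.
    have BK := inB_le BZw LK.
    have H2 := A2 HC d BZw LK; rewrite CZw setvE eqxx restrE /= eqxx minnn in H2.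
    have ltx : restr (inl w) xl d < x d.
      rewrite restrE /= eqxx shiftE.
      have -> : (d \in a) = false by apply/negP => da; exact: disj da dc.
      rewrite dc; have := xpos dc; lia.
    have Iw := interesting_set BK ltx (leq_trans ltx H2).
    by case: Hxl => _ /(_ d); apply; split => //; rewrite efd.
  apply: leq_trans L0 _; rewrite /Z [vjoin _ _ _]ffunE geq_max leqnn andbT.
  rewrite !restrE shiftE /=; case: eqP => [efd|_] //.
  case: ifP => _; first exact: leq_addr.
  by case: ifP => dc //; move: nd; rewrite dc efd eqxx.
have LxZ : vle (restr (inr f) xl) Z by exact: join_r.
by rewrite -(A1 HC BZ LxZ LC) (acc_C (Hxlacc _)).
Qed.

Lemma Up_mono e : Uplus xl e -> Uplus x e.
Proof.
move=> H; apply: NNPP => NU; move: H.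
apply: (LM HC (x := restr (inr (ef e)) x) (Y := vjoin (restr (inr (ef e)) x) (restr (inr (ef e)) xl))).
- exact: acc_inB (Hxacc _).
- exact: Hxlacc.
- by apply: inB_join; [exact: acc_inB (Hxacc _)|exact: acc_inB (Hxlacc _)].
- exact: join_l.
- exact: join_r.
- exact: Gf.
- exact: NU.
Qed.

Definition phi (z : vec) : nat := \sum_(e : E) (if pb (Uplus z e) then z e else b e).

Lemma phi_step : 1 < k -> phi x + 2 <= phi xl.
Proof.
move=> k2.
have Sa : \sum_(e : E) lam * ((e \in a) && true) = lam * k.
  rewrite -big_distrr /= sum_count ?count_predT //.
  by move: Hu; rewrite cat_uniq => /and3P [].
have : phi x + lam * k <= phi xl.
  rewrite -Sa /phi -big_split /=; apply: leq_sum => e _.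
  have xb := vleP _ _ Hxb e; have xlb := vleP _ _ Hxlb e.
  rewrite andbT; case ea: (e \in a).
    have U := UpA ea; case: pbP => // _.
    have xle : xl e = x e + lam by rewrite shiftE ea.
    by case: pbP => _; rewrite muln1 -?xle // -xle.
  rewrite muln0 addn0; case: (pbP (Uplus xl e)) => [U|_]; last by case: pbP.
  have U' := Up_mono U; case: pbP => // _.
  rewrite shiftE ea; case: ifP => // ec; by exfalso; apply: (notUp ec).
have : 2 <= lam * k by rewrite -(mul1n 2) leq_mul.
lia.
Qed.

End Rot.


Section Final.
Variables (W F E : finType) (ew : E -> W) (ef : E -> F) (b : {ffun E -> nat}).
Variable C : (W + F)%type -> {ffun E -> nat} -> {ffun E -> nat}.
Hypothesis HC : forall v, choice_axioms ew ef b C v.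
Hypothesis Hsimple : injective (fun e => (ew e, ef e)).

Local Notation vec := (vec E).
Local Notation darc := (darc ew ef b C).
Local Notation stable := (stable ew ef b C).

Lemma darc_FT (x : vec) e e' : darc x (e,false) (e',true) -> Uplus ew ef b C x e.
Proof. move=> [_ [_ H0]]; move: H0 => /=; intuition discriminate. Qed.
Lemma darc_TT (x : vec) e e' : darc x (e,true) (e',true) -> legal_f ew ef b C x e e'.
Proof. move=> [_ [_ H0]]; move: H0 => /=; intuition discriminate. Qed.
Lemma darc_TF (x : vec) e e' : darc x (e,true) (e',false) -> Uminus ew ef b C x e.
Proof. move=> [_ [_ H0]]; move: H0 => /=; intuition discriminate. Qed.
Lemma darc_FF (x : vec) e e' : darc x (e,false) (e',false) -> essential ew ef b C x e e'.
Proof. move=> [_ [_ H0]]; move: H0 => /=; intuition discriminate. Qed.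

Lemma step_main (x : vec) a c lam : stable x -> rotation ew ef b C x a c ->
  is_tau ew ef b C x a c lam ->
  stable (shift x a c lam) /\ phi ew ef b C x + 2 <= phi ew ef b C (shift x a c lam).
Proof.
move=> Hx; case: a => [|a0 a'] //; set a := a0 :: a'.
move=> [Hsz [Hu H]] [Ht1 Ht2].
have HUp : forall i, i < size a -> Uplus ew ef b C x (nth a0 a i).
  by move=> i ik; case: (H i ik) => _ [d1 _ _ _]; exact: darc_FT d1.
have Hlf : forall i, i < size a -> legal_f ew ef b C x (nth a0 a i) (nth a0 c i).
  by move=> i ik; case: (H i ik) => _ [_ d2 _ _]; exact: darc_TT d2.
have HUm : forall i, i < size a -> Uminus ew ef b C x (nth a0 c i).
  by move=> i ik; case: (H i ik) => _ [_ _ d3 _]; exact: darc_TF d3.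
have Hes : forall i, i < size a -> essential ew ef b C x (nth a0 c i) (nth a0 (rot 1 a) i).
  by move=> i ik; case: (H i ik) => _ [_ _ _ d4]; rewrite nth_rot1 //; exact: darc_FF d4.
have Y1 := y1_stable HC Hx Hsz Hu HUp Hlf HUm Hes.
have l1 : 0 < lam.
  apply: Ht2 => i /andP [i1 i2]; have -> : i = 1 by lia.
  split => // e ec; have := xpos Hsz HUm ec; lia.
have Hxl : stable (shift x a c lam) by case: (Ht1 lam) => //; rewrite l1 leqnn.
split => //.
apply: (phi_step HC Hx Hsz Hu HUp HUm l1 Hxl).
rewrite ltnNge; apply/negP => k1.
have ka : size a = 1 by move: k1; rewrite /a /=; lia.
have ra : rot 1 a = a by rewrite -{1}ka rot_size.
have e1 := efAC Hlf (ltn0Sn _ : 0 < size a).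
have e2 := ewCN Hes (ltn0Sn _ : 0 < size a); rewrite ra in e2.
have : nth a0 c 0 = nth a0 a 0 by apply: Hsimple; rewrite /= e1 e2.
move=> E0; apply: (disj Hu (e := nth a0 a 0)); first by rewrite mem_nth.
by rewrite -E0 mem_nth // Hsz.
Qed.

End Final.

Unset Implicit Arguments.

Theorem lemma6p2 (W F E : finType) (ew : E -> W) (ef : E -> F)
  (b : {ffun E -> nat}) (C : (W + F)%type -> {ffun E -> nat} -> {ffun E -> nat})
  (Hsimple : injective (fun e => (ew e, ef e)))
  (HC : forall v, choice_axioms ew ef b C v)
  (xmin xmax : {ffun E -> nat})
  (Hmin : stable ew ef b C xmin /\
          forall y, stable ew ef b C y -> prefF ew ef C xmin y)
  (Hmax : stable ew ef b C xmax /\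
          forall y, stable ew ef b C y -> prefF ew ef C y xmax)
  (xs : seq {ffun E -> nat})
  (Hroute : full_route ew ef b C xmin xmax xs) :
  2 * (size xs).-1 <= (\max_(e : E) b e) * #|E|.
Proof.
case: xs Hroute => [|x0 xs'] // [E0 [El Hst]].
have Inv : forall i, i < size (x0 :: xs') ->
    stable ew ef b C (nth x0 (x0 :: xs') i) /\ 2 * i <= phi ew ef b C (nth x0 (x0 :: xs') i).
  elim=> [|i IH] lt.
    by rewrite /= E0; split => //; case: Hmin.
  have [Si Pi] := IH (ltnW lt).
  case: (Hst i lt) => a [c [lam [Hr [Ht ->]]]].
  have [S2 P2] := step_main HC Hsimple Si Hr Ht.
  split => //; apply: leq_trans P2; rewrite mulnS addnC leq_add2r; exact: Pi.
have [Sl Pl] := Inv (size xs') (leqnn _).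
rewrite /=; apply: leq_trans Pl _.
have Hb := Hxb Sl.
apply: (@leq_trans (\sum_(e : E) b e)).
  apply: leq_sum => e _; case: ifP => // _; exact: (vleP _ _ Hb e).
rewrite mulnC -sum_nat_const; apply: leq_sum => e _.
exact: (leq_bigmax e).
Qed.
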